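(* Let $n\geq 2$. Then $C(r_{1/n})=P_n\rtimes\mathcal{E}^n_\Delta$; that is, $P_n$ is a normal subgroup of $C(r_{1/n})$, $P_n\cap\mathcal{E}^n_\Delta$ is trivial, and $C(r_{1/n})=P_n\cdot\mathcal{E}^n_\Delta$.
   Context: Identify $\mathbb{T}^1=\mathbb{R}/\mathbb{Z}$ with $[0,1)$. An interval exchange transformation is a bijection of $\mathbb{T}^1$ that is a translation on each piece of some partition of $[0,1)$ into finitely many half-open intervals $[a,b)$; $\mathcal{E}$ is the group of these. $C(f)=\{g\in\mathcal{E}:fg=gf\}$. $r_{1/n}(x)=x+1/n$. Let $I_i=[\frac{i-1}{n},\frac{i}{n})$, $1\le i\le n$. $\mathcal{E}^n_\Delta=\{g\in C(r_{1/n}): g(I_i)=I_i \text{ for } 1\le i\le n\}$. $P_n=\{g\in C(r_{1/n}):$ for every $x\in\mathbb{T}^1$ there is $k\in\mathbb{Z}$ with $g(x)=x+k/n \pmod 1\}$. *)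

(* Defs.v *)
(* concrete reals R. The circle T^1 = R/Z is identified with
   [0,1); maps are functions R -> R, of which only the values on [0,1) matter. *)
From Stdlib Require Export Reals.
Open Scope R_scope.

Definition in01 (x : R) : Prop := 0 <= x < 1.

Definition mod1 (x : R) : R := x - IZR (Int_part x).

Definition bij01 (f : R -> R) : Prop :=
  (forall x, in01 x -> in01 (f x)) /\
  (forall x y, in01 x -> in01 y -> f x = f y -> x = y) /\
  (forall y, in01 y -> exists x, in01 x /\ f x = y).

Definition IET (f : R -> R) : Prop :=
  bij01 f /\
  exists (k : nat) (a t : nat -> R),
    a O = 0 /\ a k = 1 /\
    (forall i, (i < k)%nat -> a i < a (S i)) /\
    (forall i x, (i < k)%nat -> a i <= x < a (S i) -> f x = mod1 (x + t i)).

Definition feq (f g : R -> R) : Prop := forall x, in01 x -> f x = g x.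

Definition idT (x : R) : R := x.

Definition rot (n : nat) (x : R) : R := mod1 (x + / INR n).

Definition Crot (n : nat) (g : R -> R) : Prop :=
  IET g /\ feq (fun x => g (rot n x)) (fun x => rot n (g x)).

Definition Iint (n i : nat) (x : R) : Prop :=
  INR (i - 1) / INR n <= x < INR i / INR n.

Definition EDelta (n : nat) (g : R -> R) : Prop :=
  Crot n g /\
  forall i, (1 <= i <= n)%nat ->
    (forall x, Iint n i x -> Iint n i (g x)) /\
    (forall y, Iint n i y -> exists x, Iint n i x /\ g x = y).

Definition Pn (n : nat) (g : R -> R) : Prop :=
  Crot n g /\
  forall x, in01 x -> exists k : Z, g x = mod1 (x + IZR k / INR n).

Definition inv01 (g g' : R -> R) : Prop :=
  feq (fun x => g' (g x)) idT /\ feq (fun x => g (g' x)) idT.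

(* Main.v *)
Require Import Defs.
From Stdlib Require Import Lra Lia ZArith List ClassicalEpsilon Classical.
Import ListNotations.

Lemma Ip_char (z : R) (m : Z) : IZR m <= z < IZR m + 1 -> Int_part z = m.
Proof.
  intros [H1 H2]. unfold Int_part.
  rewrite <- (tech_up z (m+1)); [lia| rewrite plus_IZR; simpl; lra | rewrite plus_IZR; simpl; lra].
Qed.

Lemma Ip_bounds (z : R) : IZR (Int_part z) <= z < IZR (Int_part z) + 1.
Proof. destruct (base_Int_part z); lra. Qed.

Lemma Ip_shift (z : R) (m : Z) : Int_part (z + IZR m) = (Int_part z + m)%Z.
Proof. apply Ip_char. rewrite plus_IZR. pose proof (Ip_bounds z). lra. Qed.

Lemma mod1_in01 z : in01 (mod1 z).
Proof. unfold in01, mod1. pose proof (Ip_bounds z). lra. Qed.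

Lemma mod1_eq z : exists m, mod1 z = z + IZR m.
Proof. exists (- Int_part z)%Z. unfold mod1. rewrite opp_IZR. lra. Qed.

Lemma mod1_char w z m : in01 w -> w = z + IZR m -> w = mod1 z.
Proof.
  intros [H1 H2] E. unfold mod1.
  rewrite (Ip_char z (-m)); [rewrite opp_IZR; lra|rewrite opp_IZR; lra].
Qed.

Lemma mod1_id z : in01 z -> mod1 z = z.
Proof. intros H. symmetry. apply (mod1_char z z 0); auto. simpl; lra. Qed.

Lemma mod1_shift z m : mod1 (z + IZR m) = mod1 z.
Proof.
  destruct (mod1_eq z) as [k Hk]. symmetry.
  apply (mod1_char _ _ (k - m)). apply mod1_in01. rewrite Hk, minus_IZR. lra.
Qed.

Lemma mod1_add a b : mod1 (mod1 a + b) = mod1 (a + b).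
Proof.
  destruct (mod1_eq a) as [k Hk]. rewrite Hk.
  replace (a + IZR k + b) with ((a + b) + IZR k) by lra. apply mod1_shift.
Qed.

Lemma int_small m : -1 < IZR m < 1 -> m = 0%Z.
Proof.
  intros [H1 H2]. apply lt_IZR in H2. assert (-1 < m)%Z by (apply lt_IZR; simpl; lra). lia.
Qed.

Lemma int01 a b m : in01 a -> in01 b -> a = b + IZR m -> m = 0%Z.
Proof. unfold in01; intros; apply int_small; lra. Qed.

Definition nobreak (S : list R) (x y : R) := forall s, In s S -> ~ (x < s <= y).
Definition PT (f : R -> R) (S : list R) := forall x y, 0 <= x -> x <= y -> y < 1 ->
  nobreak S x y -> exists m : Z, f y - y = f x - x + IZR m.

Lemma find_piece (k : nat) (a : nat -> R) x :
  a O = 0 -> a k = 1 -> (forall i, (i < k)%nat -> a i < a (S i)) -> 0 <= x < 1 ->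
  exists i, (i < k)%nat /\ a i <= x < a (S i).
Proof.
  intros H0 Hk Hinc Hx.
  assert (forall d j, (j + d = k)%nat -> a j <= x -> exists i, (i < k)%nat /\ a i <= x < a (S i)).
  { induction d; intros j Hj Ha.
    - replace j with k in Ha by lia. lra.
    - destruct (Rlt_dec x (a (S j))).
      + exists j. split; [lia|lra].
      + apply (IHd (S j)); [lia|lra]. }
  apply (H k O); [lia|lra].
Qed.

Lemma IET_PT f : IET f -> bij01 f /\ exists S, PT f S.
Proof.
  intros [Hb [k [a [t [H0 [Hk [Hinc Hpc]]]]]]]. split; auto.
  exists (map a (seq 0 (S k))). intros x y Hx Hxy Hy Hnb.
  destruct (find_piece k a x H0 Hk Hinc ltac:(lra)) as [i [Hi Hxi]].
  assert (y < a (S i)).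
  { destruct (Rlt_dec y (a (S i))) as [|Hn]; auto. exfalso.
    apply (Hnb (a (S i))). apply in_map. apply in_seq. lia. lra. }
  rewrite (Hpc i x Hi ltac:(lra)), (Hpc i y Hi ltac:(lra)).
  exists (Int_part (x + t i) - Int_part (y + t i))%Z. unfold mod1. rewrite minus_IZR. lra.
Qed.

Definition nextb (S : list R) (x : R) : R :=
  fold_right (fun s acc => if Rlt_dec x s then if Rlt_dec s acc then s else acc else acc) 1 S.

Lemma nextb_prop S x : (nextb S x = 1 \/ (In (nextb S x) S /\ x < nextb S x)) /\ nextb S x <= 1.
Proof.
  induction S as [|h S IH]; simpl. { split; [left; auto|lra]. }
  fold (nextb S x). destruct IH as [[E|[Hin Hlt]] Hle].
  - destruct (Rlt_dec x h); [destruct (Rlt_dec h (nextb S x))|]; split; auto; lra.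
  - destruct (Rlt_dec x h); [destruct (Rlt_dec h (nextb S x))|]; split; auto; lra.
Qed.

Lemma nextb_min S x s : In s S -> x < s -> nextb S x <= s.
Proof.
  induction S as [|h S IH]; simpl; [tauto|]. fold (nextb S x). intros [->|Hin] Hxs.
  - destruct (Rlt_dec x s); [destruct (Rlt_dec s (nextb S x))|]; lra.
  - specialize (IH Hin Hxs).
    destruct (Rlt_dec x h); [destruct (Rlt_dec h (nextb S x))|]; lra.
Qed.

Fixpoint cntgt (x : R) (S : list R) : nat :=
  match S with nil => O | h :: t => ((if Rlt_dec x h then 1 else 0) + cntgt x t)%nat end.

Lemma cntgt_le x S : (cntgt x S <= length S)%nat.
Proof. induction S; simpl; [lia|destruct (Rlt_dec x a); lia]. Qed.

Lemma cntgt_mono x y S : x <= y -> (cntgt y S <= cntgt x S)%nat.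
Proof.
  intros H; induction S as [|h S IH]; simpl; [lia|].
  destruct (Rlt_dec y h); destruct (Rlt_dec x h); try lia; lra.
Qed.

Lemma cntgt_strict x y S : x < y -> In y S -> (cntgt y S < cntgt x S)%nat.
Proof.
  intros H; induction S as [|h S IH]; simpl; [tauto|]. intros [->|Hin].
  - pose proof (cntgt_mono x y S ltac:(lra)).
    destruct (Rlt_dec y y); [lra|]. destruct (Rlt_dec x y); [lia|lra].
  - specialize (IH Hin). destruct (Rlt_dec y h); destruct (Rlt_dec x h); try lia; lra.
Qed.

Lemma PT_IET f L : bij01 f -> PT f L -> IET f.
Proof.
  intros Hb HP. split; auto.
  set (a := fun i => Nat.iter i (nextb L) 0).
  assert (Ha0 : a O = 0) by reflexivity.
  assert (HaS : forall i, a (S i) = nextb L (a i)) by reflexivity.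
  assert (Hrng : forall i, 0 <= a i <= 1).
  { induction i. rewrite Ha0; lra. rewrite HaS.
    destruct (nextb_prop L (a i)) as [[E|[_ Hl]] Hle]; lra. }
  assert (Hmon : forall i, a i <= a (S i)).
  { intros i. rewrite HaS. specialize (Hrng i).
    destruct (nextb_prop L (a i)) as [[E|[_ Hl]] Hle]; lra. }
  assert (Hmon2 : forall i j, (i <= j)%nat -> a i <= a j).
  { intros i j Hij. induction Hij. lra. specialize (Hmon m). lra. }
  assert (Hterm : forall i, a i = 1 \/ (a i < 1 /\ (cntgt (a i) L + i <= length L)%nat)).
  { induction i.
    - right. rewrite Ha0. split; [lra|]. pose proof (cntgt_le 0 L). lia.
    - destruct IHi as [E|[Hl Hc]].
      + left. rewrite HaS, E. destruct (nextb_prop L 1) as [[E'|[_ Hl]] Hle]; auto; lra.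
      + rewrite HaS. destruct (nextb_prop L (a i)) as [[E|[Hin Hl']] Hle]; auto.
        destruct (Req_dec (nextb L (a i)) 1) as [E|]; auto. right. split; [lra|].
        pose proof (cntgt_strict _ _ L Hl' Hin). lia. }
  assert (Hfin : a (S (length L)) = 1).
  { destruct (Hterm (S (length L))) as [|[_ Hc]]; auto. lia. }
  assert (Hmin : forall m, a m = 1 -> exists k, a k = 1 /\ forall i, (i < k)%nat -> a i < 1).
  { induction m; intros Hm.
    - exists O. split; auto. intros; lia.
    - destruct (Req_dec (a m) 1) as [E|Hne]; auto.
      exists (S m). split; auto. intros i Hi. pose proof (Hmon2 i m ltac:(lia)).
      pose proof (Hrng m). lra. }
  destruct (Hmin _ Hfin) as [k [Hk Hlt]].
  exists k, a, (fun i => f (a i) - a i). split; auto. split; auto. split.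
  { intros i Hi. rewrite HaS. specialize (Hlt i Hi).
    destruct (nextb_prop L (a i)) as [[E|[_ Hl]] Hle]; lra. }
  intros i x Hi Hx. pose proof (Hrng i). pose proof (Hrng (S i)).
  destruct (HP (a i) x) as [m Hm]; try lra.
  { intros s Hs [H1 H2]. pose proof (nextb_min L (a i) s Hs H1). rewrite <- HaS in H3. lra. }
  apply (mod1_char _ _ m). apply Hb. unfold in01; lra. lra.
Qed.

Lemma piece_lin g Sg x y : bij01 g -> PT g Sg -> 0 <= x -> x <= y -> y < 1 -> nobreak Sg x y ->
  (forall z, x < z <= y -> g z <> 0) -> g y = g x + (y - x).
Proof.
  intros Hb HP Hx Hxy Hy Hnb H0.
  destruct (HP x y Hx Hxy Hy Hnb) as [m Hm].
  destruct Hb as [Hin _].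
  assert (Gx := Hin x ltac:(unfold in01; lra)). assert (Gy := Hin y ltac:(unfold in01; lra)).
  unfold in01 in *.
  assert (Hm2 : IZR m > -2) by lra. assert (Hm1: IZR m < 1) by lra.
  apply lt_IZR in Hm1. assert (-2 < m)%Z by (apply lt_IZR; simpl; lra).
  destruct (Z.eq_dec m 0) as [->|Hne]; [simpl in Hm; lra|].
  assert (m = -1)%Z by lia. subst m. exfalso.
  set (z := x + (1 - g x)).
  assert (Hz1 : x < z) by (unfold z; lra). assert (Hz2 : z <= y) by (unfold z; simpl in Hm; lra).
  destruct (HP x z Hx ltac:(lra) ltac:(lra)) as [m' Hm'].
  { intros s Hs [H1 H2]. apply (Hnb s Hs). lra. }
  assert (Gz := Hin z ltac:(lra)).
  assert (IZR m' < 0) by (unfold z in *; lra). assert (IZR m' > -2) by (unfold z in *; lra).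
  apply lt_IZR in H1. assert (-2 < m')%Z by (apply lt_IZR; simpl; lra).
  assert (m' = -1)%Z by lia. subst m'.
  apply (H0 z); [lra|]. unfold z in *. simpl in Hm'. lra.
Qed.

Lemma preimages g (l : list R) : bij01 g -> exists L, forall s, In s l -> in01 s ->
  forall z, in01 z -> g z = s -> In z L.
Proof.
  intros [Hin [Hinj Hsur]]. induction l as [|s l IH].
  { exists nil. simpl; tauto. }
  destruct IH as [L HL]. destruct (classic (in01 s)) as [Hs|Hs].
  - destruct (Hsur s Hs) as [w [Hw Hgw]]. exists (w :: L). intros s' [<-|Hs'] Hs'' z Hz Hgz.
    + left. apply Hinj; auto. congruence.
    + right. eauto.
  - exists L. intros s' [<-|Hs'] Hs'' z Hz Hgz; [tauto|eauto].
Qed.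

Lemma bij01_comp f g : bij01 f -> bij01 g -> bij01 (fun x => f (g x)).
Proof.
  intros [Fi [Fj Fs]] [Gi [Gj Gs]]. split; [|split]; auto.
  intros y Hy. destruct (Fs y Hy) as [w [Hw Hfw]]. destruct (Gs w Hw) as [x [Hx Hgx]].
  exists x. split; auto. congruence.
Qed.

Lemma IET_comp f g : IET f -> IET g -> IET (fun x => f (g x)).
Proof.
  intros HF HG. apply IET_PT in HF as [Fb [Sf HPf]]. apply IET_PT in HG as [Gb [Sg HPg]].
  destruct (preimages g (0 :: Sf) Gb) as [L HL].
  apply (PT_IET _ (Sg ++ L)). apply bij01_comp; auto.
  intros x y Hx Hxy Hy Hnb.
  assert (Hnbg : nobreak Sg x y) by (intros s Hs; apply Hnb; apply in_or_app; auto).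
  assert (Hnl : forall z, x < z <= y -> ~ In z L) by (intros z Hz Hin; apply (Hnb z); auto; apply in_or_app; auto).
  destruct Gb as [Gi Gj].
  assert (Hlin : forall z, x <= z <= y -> g z = g x + (z - x)).
  { intros z Hz. apply (piece_lin g Sg); try split; auto; try lra.
    - intros s Hs [H1 H2]. apply (Hnbg s Hs). lra.
    - intros w Hw E. apply (Hnl w). lra. apply (HL 0); simpl; auto. unfold in01; lra. unfold in01; lra. }
  assert (Gx := Gi x ltac:(unfold in01; lra)). assert (Gy := Gi y ltac:(unfold in01; lra)).
  unfold in01 in Gx, Gy.
  assert (Ey := Hlin y ltac:(lra)).
  destruct (HPf (g x) (g y)) as [m Hm]; try lra.
  { intros s Hs [H1 H2]. set (z := x + (s - g x)).
    assert (Ez := Hlin z ltac:(unfold z; lra)).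
    apply (Hnl z). unfold z; lra. apply (HL s); simpl; auto. unfold in01; lra.
    unfold z, in01; lra. unfold z in *; lra. }
  exists m. lra.
Qed.

Definition prevb (S : list R) (x : R) : R :=
  fold_right (fun s acc => if Rlt_dec acc s then if Rle_dec s x then s else acc else acc) 0 S.

Lemma prevb_prop S x : 0 <= x -> (prevb S x = 0 \/ In (prevb S x) S) /\ 0 <= prevb S x <= x.
Proof.
  intros Hx. induction S as [|h S IH]; simpl. { split; [left; auto|lra]. }
  fold (prevb S x). destruct IH as [[E|Hin] Hle];
  destruct (Rlt_dec (prevb S x) h); try destruct (Rle_dec h x); split; auto; lra.
Qed.

Lemma prevb_max S x s : In s S -> s <= x -> s <= prevb S x.
Proof.
  induction S as [|h S IH]; simpl; [tauto|]. fold (prevb S x). intros [->|Hin] Hxs.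
  - destruct (Rlt_dec (prevb S x) s); [destruct (Rle_dec s x)|]; lra.
  - specialize (IH Hin Hxs).
    destruct (Rlt_dec (prevb S x) h); [destruct (Rle_dec h x)|]; lra.
Qed.

Lemma inv_basic g g' : bij01 g -> inv01 g g' -> forall y, in01 y -> in01 (g' y) /\ g (g' y) = y.
Proof.
  intros [Gi [Gj Gs]] [I1 I2] y Hy. split; [|apply I2; auto].
  destruct (Gs y Hy) as [x [Hx <-]]. rewrite (I1 x Hx). auto.
Qed.

Lemma IET_inv g g' : IET g -> inv01 g g' -> IET g'.
Proof.
  intros HG HI. apply IET_PT in HG as [Gb [Sg HPg]].
  pose proof (inv_basic g g' Gb HI) as Hb.
  assert (Gb' := Gb). destruct Gb' as [Gi [Gj Gs]].
  apply (PT_IET _ (map g (0 :: Sg))).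
  { split; [|split].
    - intros; apply Hb; auto.
    - intros x y Hx Hy E. rewrite <- (proj2 (Hb x Hx)), <- (proj2 (Hb y Hy)), E. auto.
    - intros x Hx. exists (g x). split; auto. apply (proj1 HI); auto. }
  intros y1 y2 H1 H12 H2 Hnb.
  destruct (Hb y1 ltac:(unfold in01; lra)) as [X1 E1].
  destruct (Hb y2 ltac:(unfold in01; lra)) as [X2 E2].
  set (x1 := g' y1) in *. set (x2 := g' y2) in *. unfold in01 in X1, X2.
  set (p := prevb Sg x2).
  destruct (prevb_prop Sg x2 ltac:(lra)) as [Hp Hp2]. fold p in Hp, Hp2.
  assert (Hnbp : forall z, p <= z -> nobreak Sg z x2).
  { intros z Hz s Hs [Hs1 Hs2]. pose proof (prevb_max Sg x2 s Hs Hs2). fold p in H. lra. }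
  set (d := y2 - y1). assert (Hd : 0 <= d <= y2) by (unfold d; lra).
  destruct (Rle_dec p (x2 - d)) as [Hle|Hlt].
  - destruct (HPg (x2 - d) x2) as [m Hm]; try lra. apply Hnbp; lra.
    assert (Gz := Gi (x2 - d) ltac:(unfold in01; lra)).
    assert (m = 0%Z).
    { apply (int01 y1 (g (x2 - d)) m); auto; unfold in01 in *; try lra. unfold d in *; lra. }
    subst m. simpl in Hm.
    assert (g (x2 - d) = y1) by (unfold d in *; lra).
    assert (x2 - d = x1).
    { unfold x1. rewrite <- H. symmetry. apply (proj1 HI). unfold in01; lra. }
    exists 0%Z. simpl. unfold d in *. lra.
  - exfalso. destruct (HPg p x2) as [m Hm]; try lra. apply Hnbp; lra.
    assert (Gp := Gi p ltac:(unfold in01; lra)).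
    assert (m = 0%Z).
    { apply (int01 (y2 - (x2 - p)) (g p) m); auto; unfold d, in01 in *; try lra. }
    subst m. simpl in Hm.
    apply (Hnb (g p)). { apply in_map. destruct Hp as [E|Hin]; [left; auto|right; auto]. }
    unfold d in *. lra.
Qed.

Lemma IET_feq f g : IET f -> feq f g -> IET g.
Proof.
  intros HF He. apply IET_PT in HF as [[Fi [Fj Fs]] [S HP]].
  apply (PT_IET _ S).
  - split; [|split].
    + intros x Hx. rewrite <- He; auto.
    + intros x y Hx Hy. rewrite <- !He; auto.
    + intros y Hy. destruct (Fs y Hy) as [x [Hx E]]. exists x. rewrite <- He; auto.
  - intros x y Hx Hxy Hy Hnb. rewrite <- !He; try (unfold in01; lra). apply HP; auto.
Qed.

Lemma IET_id : IET idT.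
Proof.
  apply (PT_IET _ nil). { unfold idT; split; [|split]; eauto. }
  intros x y _ _ _ _. exists 0%Z. unfold idT. simpl. lra.
Qed.

Lemma bij01_inv f : bij01 f -> exists f', inv01 f f'.
Proof.
  intros [Fi [Fj Fs]].
  assert (H : forall y, exists x, in01 y -> in01 x /\ f x = y).
  { intros y. destruct (classic (in01 y)) as [Hy|Hy].
    - destruct (Fs y Hy) as [x Hx]. exists x; auto.
    - exists 0. tauto. }
  exists (fun y => proj1_sig (constructive_indefinite_description _ (H y))).
  split; intros x Hx; unfold idT;
  destruct (constructive_indefinite_description _ _) as [w Hw]; simpl.
  - destruct (Hw (Fi x Hx)) as [Hw1 Hw2]. apply Fj; auto.
  - apply Hw; auto.
Qed.

Lemma INR_pos n : (1 <= n)%nat -> 0 < INR n.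
Proof. intros; apply lt_0_INR; lia. Qed.

Lemma rot_in01 n x : in01 (rot n x).
Proof. apply mod1_in01. Qed.

Lemma rot_iter n y j : (1 <= n)%nat -> in01 y -> Nat.iter j (rot n) y = mod1 (y + INR j / INR n).
Proof.
  intros Hn Hy. pose proof (INR_pos n Hn). induction j.
  - simpl. replace (y + 0 / INR n) with y by (field; lra). rewrite mod1_id; auto.
  - simpl Nat.iter. rewrite IHj. unfold rot. rewrite mod1_add, S_INR. f_equal. field. lra.
Qed.

Lemma iter_in01 n y j : in01 y -> in01 (Nat.iter j (rot n) y).
Proof. intros; destruct j; simpl; auto; apply rot_in01. Qed.

Lemma commute_iter n g y j : Crot n g -> in01 y -> g (Nat.iter j (rot n) y) = Nat.iter j (rot n) (g y).
Proof.
  intros [_ Hc] Hy. induction j; simpl; auto. rewrite Hc. rewrite IHj; auto. apply iter_in01; auto.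
Qed.

Lemma mod1_k_iter n y k : (1 <= n)%nat -> in01 y ->
  mod1 (y + IZR k / INR n) = Nat.iter (Z.to_nat (k + Z.of_nat n * Z.abs k)) (rot n) y.
Proof.
  intros Hn Hy. pose proof (INR_pos n Hn). rewrite rot_iter; auto.
  rewrite (INR_IZR_INZ (Z.to_nat _)), Z2Nat.id by (destruct (Z.abs_spec k) as [[? ->]|[? ->]]; nia). rewrite plus_IZR, mult_IZR, <- INR_IZR_INZ.
  replace (y + (IZR k + INR n * IZR (Z.abs k)) / INR n) with (y + IZR k / INR n + IZR (Z.abs k)) by (field; lra).
  rewrite mod1_shift; auto.
Qed.

Lemma commute_k n g y k : (1 <= n)%nat -> Crot n g -> in01 y ->
  g (mod1 (y + IZR k / INR n)) = mod1 (g y + IZR k / INR n).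
Proof.
  intros Hn Hg Hy. assert (Gy : in01 (g y)) by (apply (proj1 (proj1 (proj1 Hg))); auto).
  rewrite !mod1_k_iter; auto. apply commute_iter; auto.
Qed.

Lemma Crot_comp n g h : Crot n g -> Crot n h -> Crot n (fun x => g (h x)).
Proof.
  intros [Gi Gc] [Hi Hc]. split. apply IET_comp; auto.
  intros x Hx. simpl. rewrite Hc; auto. apply Gc. apply (proj1 (proj1 Hi)); auto.
Qed.

Lemma Crot_inv n g g' : Crot n g -> inv01 g g' -> Crot n g'.
Proof.
  intros [Gi Gc] HI. split. apply (IET_inv g); auto.
  intros x Hx. destruct (inv_basic g g' (proj1 Gi) HI x Hx) as [Y E].
  simpl. rewrite <- E at 1. rewrite <- Gc; auto. apply (proj1 HI). apply rot_in01.
Qed.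

Lemma Crot_feq n f g : Crot n f -> feq f g -> Crot n g.
Proof.
  intros [Fi Fc] He. split. apply (IET_feq f); auto.
  intros x Hx. simpl. rewrite <- (He (rot n x)) by apply rot_in01. rewrite <- (He x) by auto. apply Fc; auto.
Qed.

Lemma Crot_id n : Crot n idT.
Proof. split. apply IET_id. intros x Hx. reflexivity. Qed.

Lemma Pn_id n : (1 <= n)%nat -> Pn n idT.
Proof.
  intros Hn. pose proof (INR_pos n Hn). split. apply Crot_id. intros x Hx. exists 0%Z.
  unfold idT. replace (x + 0 / INR n) with x by (field; lra). rewrite mod1_id; auto.
Qed.

Lemma Pn_comp n g h : Pn n g -> Pn n h -> Pn n (fun x => g (h x)).
Proof.
  intros [Gc Gp] [Hc Hp]. split. apply Crot_comp; auto.
  intros x Hx. destruct (Hp x Hx) as [k Hk].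
  assert (Hx' : in01 (h x)) by (apply (proj1 (proj1 (proj1 Hc))); auto).
  destruct (Gp _ Hx') as [k' Hk']. exists (k + k')%Z. rewrite Hk', Hk, mod1_add, plus_IZR.
  f_equal. unfold Rdiv. ring.
Qed.

Lemma Pn_inv n g g' : Pn n g -> inv01 g g' -> Pn n g'.
Proof.
  intros [Gc Gp] HI. split. apply (Crot_inv n g); auto.
  intros x Hx. destruct (inv_basic g g' (proj1 (proj1 Gc)) HI x Hx) as [Y E].
  destruct (Gp _ Y) as [k Hk]. exists (- k)%Z.
  destruct (mod1_eq (g' x + IZR k / INR n)) as [m Hm].
  apply (mod1_char _ _ (- m)); auto. rewrite opp_IZR. unfold Rdiv. rewrite opp_IZR. lra.
Qed.

Lemma Pn_conj n g g' h : (1 <= n)%nat -> Crot n g -> inv01 g g' -> Pn n h ->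
  Pn n (fun x => g (h (g' x))).
Proof.
  intros Hn Gc HI [Hc Hp]. split.
  { apply Crot_comp; auto. apply Crot_comp; auto. apply (Crot_inv n g); auto. }
  intros x Hx. destruct (inv_basic g g' (proj1 (proj1 Gc)) HI x Hx) as [Y E].
  destruct (Hp _ Y) as [k Hk]. exists k. rewrite Hk, commute_k, E; auto.
Qed.

Lemma INR_Z n : INR n = IZR (Z.of_nat n).
Proof. apply INR_IZR_INZ. Qed.

Lemma cc_range n x : (1 <= n)%nat -> in01 x -> (0 <= Int_part (INR n * x) <= Z.of_nat n - 1)%Z.
Proof.
  intros Hn [H1 H2]. pose proof (INR_pos n Hn). pose proof (Ip_bounds (INR n * x)) as [B1 B2].
  assert (INR n * x < INR n) by nra. assert (0 <= INR n * x) by nra.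
  set (c := Int_part (INR n * x)) in *. rewrite INR_Z in *. split.
  - assert (-1 < c)%Z by (apply lt_IZR; simpl; lra). lia.
  - assert (c < Z.of_nat n)%Z by (apply lt_IZR; lra). lia.
Qed.

Lemma Iint_iff n i x : (1 <= i <= n)%nat ->
  (Iint n i x <-> Int_part (INR n * x) = Z.of_nat (i - 1)).
Proof.
  intros Hi. assert (Hn : (1 <= n)%nat) by lia. pose proof (INR_pos n Hn).
  assert (Ei : INR i = INR (i - 1) + 1) by (rewrite <- S_INR; f_equal; lia).
  unfold Iint. split.
  - intros [H1 H2]. apply Ip_char. rewrite <- INR_Z. split.
    + apply (Rmult_le_compat_l (INR n)) in H1; [|lra]. replace (INR n * (INR (i-1) / INR n)) with (INR (i-1)) in H1 by (field; lra). lra.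
    + apply (Rmult_lt_compat_l (INR n)) in H2; [|lra]. replace (INR n * (INR i / INR n)) with (INR i) in H2 by (field; lra). lra.
  - intros E. pose proof (Ip_bounds (INR n * x)) as [B1 B2]. rewrite E, <- INR_Z in B1, B2. split.
    + apply (Rmult_le_reg_l (INR n)); [lra|]. replace (INR n * (INR (i-1) / INR n)) with (INR (i-1)) by (field; lra). lra.
    + apply (Rmult_lt_reg_l (INR n)); [lra|]. replace (INR n * (INR i / INR n)) with (INR i) by (field; lra). lra.
Qed.

Lemma in_Iint n x : (1 <= n)%nat -> in01 x ->
  exists i, (1 <= i <= n)%nat /\ Int_part (INR n * x) = Z.of_nat (i - 1).
Proof.
  intros Hn Hx. pose proof (cc_range n x Hn Hx). exists (S (Z.to_nat (Int_part (INR n * x)))).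
  split; [lia|]. replace (S (Z.to_nat (Int_part (INR n * x))) - 1)%nat with (Z.to_nat (Int_part (INR n * x))) by lia.
  lia.
Qed.

Lemma Iint_in01 n i x : (1 <= i <= n)%nat -> Iint n i x -> in01 x.
Proof.
  intros Hi H. assert (Hn : (1 <= n)%nat) by lia. pose proof (INR_pos n Hn).
  apply Iint_iff in H; auto. pose proof (Ip_bounds (INR n * x)) as [B1 B2].
  rewrite H, <- INR_Z in B1, B2. assert (INR (i - 1) + 1 <= INR n).
  { rewrite <- S_INR. apply le_INR. lia. }
  pose proof (pos_INR (i-1)). split.
  - apply (Rmult_le_reg_l (INR n)); lra.
  - apply (Rmult_lt_reg_l (INR n)); lra.
Qed.

Lemma trivial_int n g : (1 <= n)%nat -> Pn n g -> EDelta n g -> feq g idT.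
Proof.
  intros Hn [Gc Gp] [_ Ge] x Hx. unfold idT. pose proof (INR_pos n Hn).
  destruct (in_Iint n x Hn Hx) as [i [Hi Ei]].
  destruct (Ge i Hi) as [Gi _]. specialize (Gi x (proj2 (Iint_iff n i x Hi) Ei)).
  apply Iint_iff in Gi; auto. rewrite <- Ei in Gi.
  destruct (Gp x Hx) as [k Hk]. destruct (mod1_eq (x + IZR k / INR n)) as [m Hm].
  rewrite Hm in Hk.
  assert (E : INR n * g x = INR n * x + IZR (k + Z.of_nat n * m)).
  { rewrite Hk, plus_IZR, mult_IZR, <- INR_Z. field. lra. }
  rewrite E, Ip_shift in Gi. assert (k + Z.of_nat n * m = 0)%Z by lia.
  rewrite H0 in E. simpl in E. apply (Rmult_eq_reg_l (INR n)); lra.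
Qed.

Definition cc n x := Int_part (INR n * x).
Definition ee n (g : R -> R) x := (IZR (cc n x) + mod1 (INR n * g x)) / INR n.

Lemma Ng_split n y : INR n * y = IZR (cc n y) + mod1 (INR n * y).
Proof. unfold cc, mod1. ring. Qed.

Lemma gin n g x : Crot n g -> in01 x -> in01 (g x).
Proof. intros Hg; apply (proj1 (proj1 (proj1 Hg))). Qed.

Lemma E0 n g x : (1 <= n)%nat -> cc n (ee n g x) = cc n x.
Proof.
  intros Hn. pose proof (INR_pos n Hn). unfold cc at 1. apply Ip_char.
  unfold ee. replace (INR n * ((IZR (cc n x) + mod1 (INR n * g x)) / INR n))
    with (IZR (cc n x) + mod1 (INR n * g x)) by (field; lra).
  pose proof (mod1_in01 (INR n * g x)). unfold in01 in *. lra.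
Qed.

Lemma E1 n g x : (1 <= n)%nat -> in01 x -> in01 (ee n g x).
Proof.
  intros Hn Hx. pose proof (INR_pos n Hn). pose proof (cc_range n x Hn Hx) as [C1 C2].
  fold (cc n x) in C1, C2. apply IZR_le in C1. apply IZR_le in C2.
  rewrite minus_IZR, <- INR_Z in C2. simpl in C1, C2.
  pose proof (mod1_in01 (INR n * g x)). unfold in01 in *. unfold ee. split.
  - apply Rmult_le_pos; [lra|]. left; apply Rinv_0_lt_compat; lra.
  - apply (Rmult_lt_reg_l (INR n)); [lra|]. field_simplify; lra.
Qed.

Lemma E_inj n g x y : (1 <= n)%nat -> Crot n g -> in01 x -> in01 y -> ee n g x = ee n g y -> x = y.
Proof.
  intros Hn Hg Hx Hy E. pose proof (INR_pos n Hn).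
  assert (Ec : cc n x = cc n y) by (rewrite <- (E0 n g x), <- (E0 n g y), E; auto; lia).
  assert (Em : mod1 (INR n * g x) = mod1 (INR n * g y)).
  { unfold ee in E. rewrite Ec in E. apply (Rmult_eq_compat_l (INR n)) in E.
    field_simplify in E; lra. }
  set (K := (cc n (g y) - cc n (g x))%Z).
  assert (Hgy : g y = mod1 (g x + IZR K / INR n)).
  { apply (mod1_char _ _ 0); [apply (gin n); auto|]. unfold K. rewrite minus_IZR.
    pose proof (Ng_split n (g x)). pose proof (Ng_split n (g y)).
    apply (Rmult_eq_reg_l (INR n)); [|lra]. simpl. field_simplify; [|lra]. lra. }
  rewrite <- commute_k in Hgy; auto.
  assert (Hy' : y = mod1 (x + IZR K / INR n)).
  { apply (proj1 (proj2 (proj1 (proj1 Hg)))); auto. apply mod1_in01. }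
  destruct (mod1_eq (x + IZR K / INR n)) as [M HM]. rewrite HM in Hy'.
  assert (Ny : INR n * y = INR n * x + IZR (K + Z.of_nat n * M)).
  { rewrite Hy', plus_IZR, mult_IZR, <- INR_Z. field. lra. }
  unfold cc in Ec. rewrite Ny, Ip_shift in Ec. assert (K + Z.of_nat n * M = 0)%Z by lia.
  rewrite H0 in Ny. simpl in Ny. apply (Rmult_eq_reg_l (INR n)); lra.
Qed.

Lemma E_surj n g y : (1 <= n)%nat -> Crot n g -> in01 y -> exists x, in01 x /\ ee n g x = y.
Proof.
  intros Hn Hg Hy. pose proof (INR_pos n Hn).
  set (c := cc n y). set (f := mod1 (INR n * y)).
  assert (Hf : in01 f) by apply mod1_in01.
  assert (Hw : in01 (f / INR n)).
  { unfold in01 in *. assert (1 <= INR n) by (apply (le_INR 1); auto). split.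
    - apply Rmult_le_pos; [lra|]. left; apply Rinv_0_lt_compat; lra.
    - apply (Rmult_lt_reg_l (INR n)); [lra|]. field_simplify; lra. }
  destruct (proj2 (proj2 (proj1 (proj1 Hg))) _ Hw) as [x0 [Hx0 Hgx0]].
  set (k := (c - cc n x0)%Z).
  set (x := mod1 (x0 + IZR k / INR n)).
  assert (Hx : in01 x) by apply mod1_in01.
  exists x. split; auto.
  destruct (mod1_eq (x0 + IZR k / INR n)) as [M HM]. fold x in HM.
  assert (Nx : INR n * x = INR n * x0 + IZR (k + Z.of_nat n * M)).
  { rewrite HM, plus_IZR, mult_IZR, <- INR_Z. field. lra. }
  assert (Ccx : cc n x = (cc n x0 + k + Z.of_nat n * M)%Z).
  { unfold cc at 1. rewrite Nx, Ip_shift. unfold cc. lia. }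
  pose proof (cc_range n x Hn Hx) as R1. pose proof (cc_range n y Hn Hy) as R2.
  change (Int_part (INR n * y)) with c in R2. change (Int_part (INR n * x)) with (cc n x) in R1.
  assert (Hb1 : (- Z.of_nat n < Z.of_nat n * M < Z.of_nat n)%Z) by (unfold k in Ccx; lia).
  assert (M = 0)%Z by (destruct (Z.lt_trichotomy M 0) as [HM0|[HM0|HM0]]; nia). subst M.
  assert (Cx : cc n x = c) by (unfold k in Ccx; lia).
  assert (Gx : g x = mod1 (f / INR n + IZR k / INR n)) by (unfold x; rewrite commute_k, Hgx0; auto).
  destruct (mod1_eq (f / INR n + IZR k / INR n)) as [M' HM']. rewrite HM' in Gx.
  assert (Ngx : INR n * g x = f + IZR (k + Z.of_nat n * M')).
  { rewrite Gx, plus_IZR, mult_IZR, <- INR_Z. field. lra. }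
  unfold ee. rewrite Ngx, mod1_shift, (mod1_id f Hf), Cx. unfold c, f.
  rewrite <- Ng_split. field. lra.
Qed.

Lemma E_rot n g x : (1 <= n)%nat -> Crot n g -> in01 x -> ee n g (rot n x) = rot n (ee n g x).
Proof.
  intros Hn Hg Hx. pose proof (INR_pos n Hn).
  destruct (mod1_eq (x + / INR n)) as [M HM]. fold (rot n x) in HM.
  assert (Gr : g (rot n x) = rot n (g x)) by (apply (proj2 Hg); auto).
  destruct (mod1_eq (g x + / INR n)) as [M' HM']. fold (rot n (g x)) in HM'.
  assert (Nr : INR n * rot n x = INR n * x + IZR (1 + Z.of_nat n * M)).
  { rewrite HM, plus_IZR, mult_IZR, <- INR_Z. simpl. field. lra. }
  assert (Ng : INR n * g (rot n x) = INR n * g x + IZR (1 + Z.of_nat n * M')).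
  { rewrite Gr, HM', plus_IZR, mult_IZR, <- INR_Z. simpl. field. lra. }
  change (rot n (ee n g x)) with (mod1 (ee n g x + / INR n)).
  apply (mod1_char _ _ M). apply E1; auto. apply rot_in01.
  unfold ee. rewrite Ng, mod1_shift. unfold cc at 1. rewrite Nr, Ip_shift.
  fold (cc n x). rewrite !plus_IZR, mult_IZR, <- INR_Z. simpl. field. lra.
Qed.

Lemma Ip_const n u v : (1 <= n)%nat -> 0 <= u -> u <= v -> v < 1 ->
  (forall j, (j <= n)%nat -> ~ (u < INR j / INR n <= v)) -> cc n v = cc n u.
Proof.
  intros Hn H1 H2 H3 HD. pose proof (INR_pos n Hn).
  pose proof (cc_range n u Hn ltac:(unfold in01; lra)) as [C1 C2]. fold (cc n u) in C1, C2.
  pose proof (Ip_bounds (INR n * u)) as [B1 B2]. fold (cc n u) in B1, B2.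
  destruct (Rlt_dec (INR n * v) (IZR (cc n u) + 1)).
  - apply Ip_char. split; [|lra]. assert (INR n * u <= INR n * v) by nra. lra.
  - exfalso. apply (HD (Z.to_nat (cc n u + 1))). lia.
    rewrite INR_Z, Z2Nat.id by lia. rewrite plus_IZR. simpl. split.
    + apply (Rmult_lt_reg_l (INR n)); [lra|]. field_simplify; lra.
    + apply (Rmult_le_reg_l (INR n)); [lra|]. field_simplify; lra.
Qed.

Lemma E_PT n g : (1 <= n)%nat -> Crot n g -> exists S, PT (ee n g) S.
Proof.
  intros Hn Hg. pose proof (INR_pos n Hn).
  destruct (IET_PT g (proj1 Hg)) as [Gb [Sg HPg]].
  set (D := map (fun j => INR j / INR n) (seq 0 (S n))).
  assert (InD : forall j, (j <= n)%nat -> In (INR j / INR n) D).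
  { intros j Hj. unfold D. apply (in_map (fun j => INR j / INR n)). apply in_seq. lia. }
  destruct (preimages g D Gb) as [L HL].
  exists (Sg ++ L ++ D). intros x y Hx Hxy Hy Hnb.
  assert (Hnbg : nobreak Sg x y) by (intros s Hs; apply Hnb; apply in_or_app; auto).
  assert (Hnl : forall z, x < z <= y -> ~ In z L).
  { intros z Hz Hin; apply (Hnb z); auto; apply in_or_app; right; apply in_or_app; auto. }
  assert (HnD : forall j, (j <= n)%nat -> ~ (x < INR j / INR n <= y)).
  { intros j Hj; apply Hnb; apply in_or_app; right; apply in_or_app; right; auto. }
  destruct Gb as [Gi Gj].
  assert (Hlin : forall z, x <= z <= y -> g z = g x + (z - x)).
  { intros z Hz. apply (piece_lin g Sg); try split; auto; try lra.
    - intros s Hs [H1 H2]. apply (Hnbg s Hs). lra.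
    - intros w Hw E. apply (Hnl w). lra. apply (HL 0); auto.
      replace 0 with (INR 0 / INR n) by (simpl; field; lra). apply InD; lia.
      unfold in01; lra. unfold in01; lra. }
  assert (Gx := Gi x ltac:(unfold in01; lra)). assert (Gy := Gi y ltac:(unfold in01; lra)).
  unfold in01 in Gx, Gy.
  assert (Ey := Hlin y ltac:(lra)).
  assert (C1 : cc n y = cc n x) by (apply Ip_const; auto; lra).
  assert (C2 : cc n (g y) = cc n (g x)).
  { apply Ip_const; auto; try lra. intros j Hj [H1 H2].
    set (z := x + (INR j / INR n - g x)).
    assert (Ez := Hlin z ltac:(unfold z; lra)).
    apply (Hnl z). unfold z; lra. apply (HL (INR j / INR n)); auto. unfold in01; lra.
    unfold z, in01; lra. unfold z in *; lra. }
  exists 0%Z. unfold ee. unfold mod1. fold (cc n (g x)). fold (cc n (g y)).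
  rewrite C1, C2, Ey. simpl. field. lra.
Qed.

Lemma E_Crot n g : (1 <= n)%nat -> Crot n g -> Crot n (ee n g).
Proof.
  intros Hn Hg. destruct (E_PT n g Hn Hg) as [S HS]. split.
  - apply (PT_IET _ S); auto. split; [|split].
    + intros; apply E1; auto.
    + intros; eapply E_inj; eauto.
    + intros; apply E_surj; auto.
  - intros x Hx. apply E_rot; auto.
Qed.

Lemma E_Delta n g : (1 <= n)%nat -> Crot n g -> EDelta n (ee n g).
Proof.
  intros Hn Hg. split. apply E_Crot; auto.
  intros i Hi. split.
  - intros x Hx. assert (X := Iint_in01 n i x Hi Hx).
    apply Iint_iff in Hx; auto. apply Iint_iff; auto. fold (cc n (ee n g x)). rewrite E0; auto.
  - intros y Hy. assert (Y := Iint_in01 n i y Hi Hy).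
    destruct (E_surj n g y Hn Hg Y) as [x [Hx E]]. exists x. split; auto.
    apply Iint_iff in Hy; auto. apply Iint_iff; auto. fold (cc n x). rewrite <- (E0 n g x), E; auto.
Qed.

Lemma decomp n g : (1 <= n)%nat -> Crot n g ->
  exists p e, Pn n p /\ EDelta n e /\ feq g (fun x => p (e x)).
Proof.
  intros Hn Hg. pose proof (INR_pos n Hn).
  assert (Ec := E_Crot n g Hn Hg).
  destruct (bij01_inv _ (proj1 (proj1 Ec))) as [e' He'].
  exists (fun y => g (e' y)), (ee n g). split; [|split].
  - split. apply Crot_comp; auto. apply (Crot_inv n (ee n g)); auto.
    intros y Hy. destruct (inv_basic _ _ (proj1 (proj1 Ec)) He' y Hy) as [X E].
    set (x := e' y) in *. exists (cc n (g x) - cc n x)%Z.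
    apply (mod1_char _ _ 0). apply (gin n); auto.
    pose proof (Ng_split n (g x)). rewrite <- E. unfold ee. rewrite minus_IZR.
    apply (Rmult_eq_reg_l (INR n)); [|lra]. simpl. field_simplify; [|lra]. lra.
  - apply E_Delta; auto.
  - intros x Hx. simpl. rewrite (proj1 He' x Hx). reflexivity.
Qed.

Theorem proposition5p5 (n : nat) (hn : (2 <= n)%nat) :
  (* P_n is a normal subgroup of C(r_{1/n}) *)
  ((forall g, Pn n g -> Crot n g) /\
   Pn n idT /\
   (forall g h, Pn n g -> Pn n h -> Pn n (fun x => g (h x))) /\
   (forall g g', Pn n g -> inv01 g g' -> Pn n g') /\
   (forall g g' h, Crot n g -> inv01 g g' -> Pn n h ->
      Pn n (fun x => g (h (g' x))))) /\
  (* P_n ∩ E^n_Delta is trivial *)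
  (forall g, Pn n g -> EDelta n g -> feq g idT) /\
  (* C(r_{1/n}) = P_n · E^n_Delta *)
  (forall g, Crot n g <->
     exists p e, Pn n p /\ EDelta n e /\ feq g (fun x => p (e x))).
Proof.
  assert (Hn : (1 <= n)%nat) by lia.
  split; [|split].
  - split; [|split; [|split; [|split]]].
    + intros g [H _]; auto.
    + apply Pn_id; auto.
    + apply Pn_comp.
    + apply Pn_inv.
    + intros; apply Pn_conj; auto.
  - intros; apply (trivial_int n); auto.
  - intros g. split.
    + apply decomp; auto.
    + intros [p [e [[Hp _] [[He _] Hf]]]].
      apply (Crot_feq n (fun x => p (e x))). apply Crot_comp; auto.
      intros x Hx. symmetry. apply Hf; auto.
Qed.
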